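(* Let $H(d,q)$ be the Hamming graph, with intersection numbers $c_i=i$ and $b_i=(d-i)(q-1)$ for $i=0,1,\ldots,d$. Let $A$ and $D$ be its adjacency matrix and distance matrix (same vertex ordering), and let $t=dq^{d-1}(q-1)$. Define $$p(x)=t\left\{ \prod_{i=1}^d\frac{x-b_{0}+qc_{i}}{qc_{i}}- \frac{1}{d(q-1)} \prod_{\substack{i=0\\ i\neq1}}^d \frac{x-b_{0}+qc_{i}}{q(c_{i}-1)}\right\}.$$ Then $D=p(A)$.
   Context: The Hamming graph $H(d,q)$ (with $d\ge 1$, $q\ge 2$) has as vertices all ordered $d$-tuples over a $q$-element set, two vertices being adjacent if and only if they differ in exactly one coordinate. The distance matrix of a connected graph has $(u,v)$ entry equal to the length of a shortest $u$–$v$ path. The intersection numbers of a distance regular graph: for vertices $x,y$ at distance $i$, $c_i$ (resp. $b_i$) is the number of neighbours of $y$ at distance $i-1$ (resp. $i+1$) from $x$. *)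

(* Defs.v *)
From HB Require Import structures.
From mathcomp Require Import all_boot all_order all_algebra.
Set Implicit Arguments. Unset Strict Implicit. Unset Printing Implicit Defensive.
Import Order.TTheory GRing.Theory Num.Theory.
Local Open Scope ring_scope.

Definition hvertex (d q : nat) := {ffun 'I_d -> 'I_q}.

Definition hadj (d q : nat) : rel (hvertex d q) :=
  fun u v => #|[set i | u i != v i]| == 1%N.

Definition walkb (T : finType) (e : rel T) (n : nat) (x y : T) : bool :=
  [exists s : n.-tuple T, path e x s && (last x s == y)].

(* Graph distance: the length of a shortest x-y walk (a shortest walk, if any,
   has length < #|T|); for disconnected pairs this returns #|T| (irrelevant for
   connected graphs). *)
Definition gdist (T : finType) (e : rel T) (x y : T) : nat :=
  find (fun n => walkb e n x y) (iota 0 #|T|).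

Definition adj_mx (R : pzRingType) (T : finType) (e : rel T) : 'M[R]_#|T| :=
  \matrix_(i, j) (e (enum_val i) (enum_val j))%:R.

Definition dist_mx (R : pzRingType) (T : finType) (e : rel T) : 'M[R]_#|T| :=
  \matrix_(i, j) (gdist e (enum_val i) (enum_val j))%:R.

Definition mx_eval (R : comNzRingType) (n : nat) (p : {poly R}) (A : 'M[R]_n) : 'M[R]_n :=
  \sum_(k < size p) p`_k *: A ^+ k.

Definition hc (i : nat) : nat := i.
Definition hb (d q i : nat) : nat := ((d - i) * (q - 1))%N.

Definition hpoly (R : fieldType) (d q : nat) : {poly R} :=
  let t : R := (d * q ^ d.-1 * (q - 1))%N%:R in
  let lin (i : nat) : {poly R} := 'X - ((hb d q 0)%:R)%:P + ((q * hc i)%N%:R)%:P in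
  t%:P *
  (\prod_(1 <= i < d.+1) (lin i * (((q * hc i)%N%:R)^-1)%:P)
   - (((d * (q - 1))%N%:R)^-1)%:P *
     \prod_(0 <= i < d.+1 | i != 1%N)
        (lin i * ((q%:R * ((hc i)%:R - 1))^-1)%:P)).

(* Main.v *)
Require Import Defs.
From HB Require Import structures.
From mathcomp Require Import all_boot all_order all_algebra ring.
Import GRing.Theory Num.Theory.
Set Implicit Arguments. Unset Strict Implicit. Unset Printing Implicit Defensive.
Local Open Scope ring_scope.

Definition mxT (R : pzRingType) (T : finType) (f : T -> T -> R) : 'M[R]_#|T| :=
  \matrix_(i, j) f (enum_val i) (enum_val j).

Lemma mxT_mul (R : pzRingType) (T : finType) (f g : T -> T -> R) :
  mxT f *m mxT g = mxT (fun u v => \sum_w f u w * g w v).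
Proof.
apply/matrixP => i j; rewrite !mxE.
have -> : \sum_w f (enum_val i) w * g w (enum_val j) = \sum_(w in T) f (enum_val i) w * g w (enum_val j) by [].
by rewrite [RHS]big_enum_val /=; apply: eq_bigr => k _; rewrite !mxE.
Qed.

Lemma mxT_lin (R : pzRingType) (T : finType) (I : finType) (a : I -> R) (f : I -> T -> T -> R) :
  mxT (fun u v => \sum_S a S * f S u v) = \sum_S a S *: mxT (f S).
Proof.
apply/matrixP => i j; rewrite mxE summxE; apply: eq_bigr => S _; by rewrite !mxE.
Qed.

Lemma mxT_id (R : pzRingType) (T : finType) :
  mxT (fun u v : T => (u == v)%:R) = 1%:M :> 'M[R]_#|T|.
Proof.
apply/matrixP => i j; rewrite !mxE (inj_eq enum_val_inj) //.
Qed.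

Lemma prod_bool (R : comPzSemiRingType) (I : finType) (P : pred I) :
  \prod_i (P i)%:R = [forall i, P i]%:R :> R.
Proof.
case: (boolP [forall i, P i]) => [/forallP H | /forallPn [i Hi]].
  by rewrite big1 // => i _; rewrite H.
by rewrite (bigD1 i) //= (negbTE Hi) mul0r.
Qed.

Lemma card_sum (R : pzSemiRingType) (I : finType) (P : pred I) :
  #|[set i | P i]|%:R = \sum_i (P i)%:R :> R.
Proof.
rewrite -sum1_card natr_sum big_mkcond /=; apply: eq_bigr => i _.
by rewrite inE; case: (P i).
Qed.

Definition comp1 (R : pzRingType) q (X Y : 'I_q -> 'I_q -> R) a b := \sum_x X a x * Y x b.
Definition PMf (R : pzRingType) d q (F : 'I_d -> 'I_q -> 'I_q -> R) (u v : hvertex d q) :=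
  \prod_c F c (u c) (v c).

Lemma PMf_mul (R : comPzRingType) d q (F G : 'I_d -> 'I_q -> 'I_q -> R) u v :
  \sum_w PMf F u w * PMf G w v = PMf (fun c => comp1 (F c) (G c)) u v.
Proof.
rewrite /PMf /comp1.
rewrite (bigA_distr_bigA (fun c x => F c (u c) x * G c x (v c))) /=.
by apply: eq_bigr => w _; rewrite -big_split.
Qed.

Definition E1 (R : fieldType) q (a b : 'I_q) : R := q%:R^-1.
Definition F1 (R : fieldType) q (a b : 'I_q) : R := (a == b)%:R - q%:R^-1.
Definition GS (R : fieldType) d q (S : {ffun 'I_d -> bool}) (c : 'I_d) : 'I_q -> 'I_q -> R :=
  if S c then @F1 R q else @E1 R q.

Lemma expand (R : fieldType) d q (al be : 'I_d -> R) (F : 'I_d -> 'I_q -> 'I_q -> R)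
  (hF : forall c a b, F c a b = al c * E1 R a b + be c * F1 R a b) u v :
  PMf F u v = \sum_(S : {ffun 'I_d -> bool}) (\prod_c (if S c then be c else al c)) * PMf (GS R S) u v.
Proof.
rewrite /PMf.
have -> : \prod_c F c (u c) (v c) =
   \prod_c \sum_(b : bool) (if b then be c * F1 R (u c) (v c) else al c * E1 R (u c) (v c)).
  by apply: eq_bigr => c _; rewrite big_bool /= hF addrC.
rewrite bigA_distr_bigA /=; apply: eq_bigr => S _; rewrite -big_split /=.
by apply: eq_bigr => c _; rewrite /GS; case: (S c).
Qed.
Lemma sum_delta (R : pzRingType) q (a : 'I_q) (X : 'I_q -> R) :
  \sum_x (a == x)%:R * X x = X a.
Proof.
rewrite (bigD1 a) //= eqxx mul1r big1 ?addr0 // => x /negbTE.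
by rewrite eq_sym => ->; rewrite mul0r.
Qed.

Lemma qnz (R : numFieldType) q : (0 < q)%N -> q%:R != 0 :> R.
Proof. by rewrite pnatr_eq0 -lt0n. Qed.

Lemma sumE1 (R : numFieldType) q (b : 'I_q) : (0 < q)%N -> \sum_x E1 R x b = 1.
Proof.
move=> hq; rewrite /E1 sumr_const card_ord -[_ *+ q]mulr_natr mulVf //; exact: qnz.
Qed.

Lemma sumF1 (R : numFieldType) q (b : 'I_q) : (0 < q)%N -> \sum_x F1 R x b = 0.
Proof.
move=> hq; rewrite /F1 sumrB; have := sumE1 R b hq; rewrite /E1 => ->.
by rewrite (bigD1 b) //= eqxx big1 ?addr0 ?subrr // => x /negbTE ->.
Qed.

Definition D1 (R : pzRingType) q (a b : 'I_q) : R := (a == b)%:R.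
Definition N1 (R : pzRingType) q (a b : 'I_q) : R := 1 - (a == b)%:R.

Lemma compD (R : pzRingType) q (X : 'I_q -> 'I_q -> R) a b : comp1 (@D1 R q) X a b = X a b.
Proof. exact: sum_delta. Qed.

Lemma compN (R : pzRingType) q (X : 'I_q -> 'I_q -> R) a b :
  comp1 (@N1 R q) X a b = \sum_x X x b - X a b.
Proof.
rewrite /comp1 /N1; under eq_bigr do rewrite mulrBl mul1r.
by rewrite sumrB sum_delta.
Qed.

Definition mu (R : pzRingType) q (b : bool) : R := if b then -1 else q%:R - 1.

Lemma compNG (R : numFieldType) d q (S : {ffun 'I_d -> bool}) c a b : (0 < q)%N ->
  comp1 (@N1 R q) (GS R S c) a b = mu R q (S c) * GS R S c a b.
Proof.
move=> hq; rewrite compN /GS /mu; case: (S c).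
  by rewrite sumF1 // sub0r mulN1r.
rewrite sumE1 // /E1 mulrBl mul1r divff ?qnz //.
Qed.

Definition Kc (R : pzRingType) d q (c c' : 'I_d) : 'I_q -> 'I_q -> R :=
  if c' == c then @N1 R q else @D1 R q.

Lemma N1_bool (R : pzRingType) (b : bool) : 1 - b%:R = (~~ b)%:R :> R.
Proof. by case: b; rewrite ?subrr ?subr0. Qed.

Lemma adj_PMf (R : comPzRingType) d q (u v : hvertex d q) :
  (hadj u v)%:R = \sum_c PMf (@Kc R d q c) u v.
Proof.
have H c : PMf (@Kc R d q c) u v = ([set i | u i != v i] == [set c])%:R.
  rewrite /PMf /Kc.
  have -> : \prod_c' (if c' == c then @N1 R q else @D1 R q) (u c') (v c') =
     \prod_c' (if c' == c then u c' != v c' else u c' == v c')%:R.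
    by apply: eq_bigr => c' _; case: (c' == c); rewrite /N1 /D1 ?N1_bool.
  rewrite prod_bool; congr ((nat_of_bool _)%:R).
  apply/idP/idP => [/forallP H | /eqP HD].
    apply/eqP/setP => j; rewrite !inE; move: (H j).
    by case: (j =P c) => [->|_] H1; rewrite H1.
  apply/forallP => i; move/setP: HD => /(_ i); rewrite !inE.
  by case: (i =P c) => _ // /negbFE.
under eq_bigr do rewrite H.
rewrite /hadj; case: (boolP (#|_| == 1%N)) => [/cards1P [x ->] | H1].
  rewrite (bigD1 x) //= eqxx big1 ?addr0 // => c /negbTE hc.
  by rewrite (inj_eq set1_inj) eq_sym hc.
rewrite big1 // => c _; case: eqP => // HD; by rewrite HD cards1 eqxx in H1.
Qed.

Definition theta (R : pzRingType) d q (S : {ffun 'I_d -> bool}) : R := \sum_c mu R q (S c).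

Lemma adj_P (R : numFieldType) d q (S : {ffun 'I_d -> bool}) (u v : hvertex d q) : (0 < q)%N ->
  \sum_w (hadj u w)%:R * PMf (GS R S) w v = theta R q S * PMf (GS R S) u v.
Proof.
move=> hq; under eq_bigr do rewrite adj_PMf mulr_suml.
rewrite exchange_big /theta mulr_suml; apply: eq_bigr => c _.
rewrite PMf_mul /PMf (bigD1 c) //= [in RHS](bigD1 c) //= mulrA; congr (_ * _).
  by rewrite /Kc eqxx compNG.
by apply: eq_bigr => c' /negbTE hc; rewrite /Kc hc compD.
Qed.
Definition ham d q (u v : hvertex d q) := #|[set i | u i != v i]|.

Lemma ham_tri d q (u w v : hvertex d q) : (ham u v <= ham u w + ham w v)%N.
Proof.
rewrite /ham; apply: leq_trans (leq_card_setU _ _).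
apply: subset_leq_card; apply/subsetP => i; rewrite !inE => huv.
by case: eqP => [hw|] //=; rewrite -hw huv.
Qed.

Lemma ham_path d q (s : seq (hvertex d q)) u :
  path (@hadj d q) u s -> (ham u (last u s) <= size s)%N.
Proof.
elim: s u => [|x s IH] u /=.
  move=> _; rewrite /ham leqn0 cards_eq0; apply/eqP/setP => i; by rewrite !inE eqxx.
move=> /andP [/eqP ha hp]; apply: leq_trans (ham_tri u x _) _.
by rewrite /ham ha add1n ltnS IH.
Qed.

Lemma walk_lb d q n (u v : hvertex d q) : walkb (@hadj d q) n u v -> (ham u v <= n)%N.
Proof.
move=> /existsP [s /andP [hp /eqP hl]].
by rewrite -hl; apply: leq_trans (ham_path hp) _; rewrite size_tuple.
Qed.

Lemma walk_ub d q n (u v : hvertex d q) : ham u v = n -> walkb (@hadj d q) n u v.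
Proof.
elim: n u => [|n IH] u.
  move/eqP; rewrite /ham cards_eq0 => /eqP H.
  have -> : u = v.
    apply/ffunP => i; apply/eqP; apply: contraT => hi.
    by have := in_set0 i; rewrite -H inE hi.
  apply/existsP; exists [tuple]; by rewrite /= eqxx.
move=> hn.
have : (0 < ham u v)%N by rewrite hn.
rewrite /ham card_gt0 => /set0Pn [c]; rewrite inE => hc.
pose u' := [ffun i => if i == c then v c else u i].
have hD : [set i | u i != u' i] = [set c].
  apply/setP => i; rewrite !inE /u' ffunE; case: (i =P c) => [->|_]; by rewrite ?eqxx.
have h' : ham u' v = n.
  have := cardsD1 c [set i | u i != v i]; rewrite /ham in hn; rewrite hn inE hc add1n.
  move=> [->]; rewrite /ham; apply: eq_card => i; rewrite !inE /u' ffunE.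
  by case: (i =P c) => [->|_]; rewrite ?eqxx.
move: (IH u' h') => /existsP [s /andP [hp hl]].
apply/existsP; exists (cons_tuple u' s); rewrite /= hp hl andbT.
by rewrite /hadj hD cards1.
Qed.

Lemma ham_le d q (u v : hvertex d q) : (ham u v <= d)%N.
Proof. by rewrite /ham; apply: leq_trans (max_card _) _; rewrite card_ord. Qed.

Lemma gdist_ham d q (u v : hvertex d q) : (1 < q)%N -> gdist (@hadj d q) u v = ham u v.
Proof.
move=> hq; rewrite /gdist.
have hN : (ham u v < #|hvertex d q|)%N.
  rewrite card_ffun !card_ord; apply: leq_ltn_trans (ham_le u v) _; exact: ltn_expl.
rewrite -(subnKC (ltnW hN)) iotaD find_cat.
have -> : has (fun n => walkb (@hadj d q) n u v) (iota 0 (ham u v)) = false.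
  apply/hasPn => k; rewrite mem_iota add0n => /andP [_ hk]; apply/negP => /walk_lb.
  by rewrite leqNgt hk.
rewrite size_iota add0n.
case E: (#|hvertex d q| - ham u v)%N => [|m]; first by move/eqP: E; rewrite subn_eq0 leqNgt hN.
by rewrite /= walk_ub // addn0.
Qed.
Lemma eq_mxT (R : pzRingType) (T : finType) (f g : T -> T -> R) :
  (forall u v, f u v = g u v) -> mxT f = mxT g.
Proof. by move=> H; apply/matrixP => i j; rewrite !mxE H. Qed.

Lemma mxT_scale (R : pzRingType) (T : finType) (a : R) (f : T -> T -> R) :
  mxT (fun u v => a * f u v) = a *: mxT f.
Proof. by apply/matrixP => i j; rewrite !mxE. Qed.

Definition AH (R : pzRingType) d q : 'M[R]_#|hvertex d q| :=
  mxT (fun u v : hvertex d q => (hadj u v)%:R).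

Lemma A_P (R : numFieldType) d q (S : {ffun 'I_d -> bool}) : (0 < q)%N ->
  AH R d q *m mxT (PMf (GS R S)) = theta R q S *: mxT (PMf (GS R S)).
Proof.
move=> hq; rewrite /AH mxT_mul -mxT_scale; apply: eq_mxT => u v; exact: adj_P.
Qed.

Lemma Ak_P (R : numFieldType) d q (S : {ffun 'I_d -> bool}) k : (0 < q)%N ->
  AH R d q ^+ k *m mxT (PMf (GS R S)) = theta R q S ^+ k *: mxT (PMf (GS R S)).
Proof.
move=> hq; elim: k => [|k IH].
  by rewrite !expr0 scale1r mul1mx.
by rewrite exprSr -[_ * _]/(_ *m _) -mulmxA A_P // -scalemxAr IH scalerA -exprS.
Qed.

Lemma eval_P (R : numFieldType) d q (S : {ffun 'I_d -> bool}) (p : {poly R}) : (0 < q)%N ->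
  mx_eval p (AH R d q) *m mxT (PMf (GS R S)) = p.[theta R q S] *: mxT (PMf (GS R S)).
Proof.
move=> hq; rewrite /mx_eval mulmx_suml horner_coef scaler_suml; apply: eq_bigr => k _.
by rewrite -scalemxAl Ak_P // scalerA.
Qed.
Definition kappa (R : pzRingType) d q (S : {ffun 'I_d -> bool}) : R :=
  \sum_c \prod_c' (if S c' then (if c' == c then -1 else 0) else (if c' == c then q%:R - 1 else q%:R)).

Lemma prod_pick (R : comPzRingType) d (c : 'I_d) (x y : R) :
  \prod_c' (if c' == c then x else y) = x * y ^+ d.-1.
Proof.
rewrite (bigD1 c) //= eqxx; congr (_ * _).
rewrite (eq_bigr (fun _ => y)) => [|c' /negbTE -> //].
by rewrite prodr_const cardC1 card_ord.
Qed.

Lemma prod_zero_seq (R : numFieldType) (r : seq nat) (P : pred nat) (F : nat -> R) i :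
  i \in r -> P i -> F i = 0 -> \prod_(j <- r | P j) F j = 0.
Proof.
move=> hi hP hF; apply/eqP; rewrite prodf_seq_eq0; apply/hasP; exists i => //.
by rewrite hP hF eqxx.
Qed.

Lemma theta_eq (R : numFieldType) d q (S : {ffun 'I_d -> bool}) :
  theta R q S = d%:R * (q%:R - 1) - #|[set c | S c]|%:R * q%:R.
Proof.
rewrite /theta card_sum mulr_suml mulr_natl.
have -> : (q%:R - 1) *+ d = \sum_(c : 'I_d) (q%:R - 1 : R) by rewrite sumr_const card_ord.
rewrite -sumrB; apply: eq_bigr => c _; rewrite /mu.
case: (S c); rewrite ?mul1r ?mul0r ?subr0 //; ring.
Qed.

Lemma coef_eq (R : numFieldType) d q (S : {ffun 'I_d -> bool}) : (1 <= d)%N -> (2 <= q)%N ->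
  kappa R q S = (hpoly R d q).[theta R q S].
Proof.
move=> hd hq; have hq0 : (0 < q)%N by apply: leq_trans hq.
have qn := qnz R hq0.
set n := #|[set c | S c]|.
have hnd : (n <= d)%N by rewrite /n; apply: leq_trans (max_card _) _; rewrite card_ord.
have hfac i : theta R q S - (hb d q 0)%:R + (q * hc i)%N%:R = q%:R * (i%:R - n%:R).
  rewrite theta_eq /hb /hc subn0 !natrM natrB //; ring.
rewrite /hpoly hornerM hornerC hornerD hornerN hornerM hornerC !horner_prod.
under eq_bigr do rewrite hornerM hornerC hornerD hornerD hornerN hornerX !hornerC hfac.
under [X in _ - _ * X]eq_bigr do rewrite hornerM hornerC hornerD hornerD hornerN hornerX !hornerC hfac.
set t := (d * q ^ d.-1 * (q - 1))%N%:R.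
have hS c : S c = (c \in [set c | S c]) by rewrite inE.
case: (ltngtP n 1) => hn.
-
  have hn0 : n = 0%N by case: n hn {hfac hnd}.
  have S0 c : S c = false.
    by rewrite hS; move/eqP: hn0; rewrite cards_eq0 => /eqP ->; rewrite inE.
  rewrite hn0 big1_seq => [|i /andP [_]]; last first.
    rewrite mem_index_iota => /andP [hi _]; rewrite subr0 -natrM divff //.
    by rewrite pnatr_eq0 muln_eq0 negb_or -!lt0n hq0 hi.
  rewrite (@prod_zero_seq R _ _ _ 0%N) ?mem_index_iota //; last by rewrite subrr !mulr0 mul0r.
  rewrite mulr0 subr0 mulr1 /kappa.
  under eq_bigr do under eq_bigr do rewrite S0.
  under eq_bigr do rewrite prod_pick.
  rewrite sumr_const card_ord /t natrM natrM natrX natrB //; rewrite -mulr_natl; ring.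
-
  rewrite (@prod_zero_seq R _ _ _ n) ?mem_index_iota ?ltnS ?(leq_trans _ hn) ?hnd //;
    last by rewrite subrr !mulr0 mul0r.
  rewrite (@prod_zero_seq R _ _ _ n) ?mem_index_iota ?ltnS ?hnd //;
    last by rewrite subrr !mulr0 mul0r.
  2: by rewrite neq_ltn hn orbT.
  rewrite mulr0 subrr mulr0 /kappa big1 // => c _.
  move: hn; rewrite /n => /card_gt1P [x [y [hx hy hxy]]].
  pose c' := if x == c then y else x.
  have hc' : c' != c by rewrite /c'; case: (x =P c) => [hxc|/eqP hxc] //; rewrite -hxc eq_sym.
  have Sc' : S c' by rewrite hS /c'; case: (x == c).
  by rewrite (bigD1 c') //= Sc' (negbTE hc') mul0r.
-
  move/eqP: (hn); rewrite /n => /cards1P [s hs].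
  have Ss c : S c = (c == s) by rewrite hS hs inE.
  rewrite (@prod_zero_seq R _ _ _ 1%N) ?mem_index_iota ?ltnS ?hd //;
    last by rewrite hs cards1 subrr !mulr0 mul0r.
  rewrite big1_seq => [|i /andP [hi1 _]]; last first.
    rewrite hs cards1 /hc; rewrite divff //; apply: mulf_neq0 => //.
    by rewrite subr_eq0 pnatr_eq1.
  rewrite /kappa (bigD1 (s : 'I_d)) //= [X in _ + X]big1 => [|c hc]; last first.
    by rewrite (bigD1 (s : 'I_d)) //= Ss eqxx eq_sym (negbTE hc) mul0r.
  under eq_bigr do rewrite Ss.
  rewrite (eq_bigr (fun c' => if c' == s then -1 else q%:R)) => [|c' _]; last first.
    by case: (c' == s).
  rewrite prod_pick addr0 /t.
  have hdq : (d * (q - 1))%N%:R != 0 :> R.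
    by rewrite pnatr_eq0 muln_eq0 negb_or -!lt0n hd subn_gt0.
  rewrite mulnAC natrM natrX mulr1 sub0r mulrN mulrAC divff // mul1r mulN1r //.
Qed.


Definition J1 (R : pzRingType) q (a b : 'I_q) : R := 1.

Lemma dist_expand (R : numFieldType) d q (u v : hvertex d q) : (0 < q)%N ->
  (ham u v)%:R = \sum_(S : {ffun 'I_d -> bool}) kappa R q S * PMf (GS R S) u v.
Proof.
move=> hq; rewrite /ham card_sum.
have H c : (u c != v c)%:R = PMf (fun c' => if c' == c then @N1 R q else @J1 R q) u v.
  rewrite /PMf (bigD1 c) //= eqxx big1 ?mulr1 => [|c' /negbTE -> //].
  by rewrite /N1 N1_bool.
have H2 c : PMf (fun c' => if c' == c then @N1 R q else @J1 R q) u v =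
   \sum_(S : {ffun 'I_d -> bool}) (\prod_c' (if S c' then (if c' == c then -1 else 0)
        else (if c' == c then q%:R - 1 else q%:R))) * PMf (GS R S) u v.
  apply: (@expand R d q (fun c' => if c' == c then q%:R - 1 else q%:R)
     (fun c' => if c' == c then -1 else 0)).
  move=> c' a b; case: (c' == c); rewrite /N1 /J1 /E1 /F1.
    by rewrite mulrBl mul1r divff ?qnz // mulN1r opprB addrA subrK.
  by rewrite mul0r addr0 divff ?qnz.
under eq_bigr do rewrite H H2.
rewrite exchange_big /kappa; apply: eq_bigr => S _; rewrite mulr_suml.
by apply: eq_bigr.
Qed.

Lemma id_expand (R : numFieldType) d q (u v : hvertex d q) : (0 < q)%N ->
  (u == v)%:R = \sum_(S : {ffun 'I_d -> bool}) 1 * PMf (GS R S) u v.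
Proof.
move=> hq.
have -> : (u == v)%:R = PMf (fun _ => @D1 R q) u v.
  rewrite /PMf /D1 prod_bool; congr ((nat_of_bool _)%:R).
  apply/eqP/forallP => [-> //|H]; apply/ffunP => c; exact/eqP.
rewrite (@expand R d q (fun _ => 1) (fun _ => 1)).
  by apply: eq_bigr => S _; congr (_ * _); apply: big1 => c _; case: (S c).
move=> c a b; rewrite /D1 /E1 /F1 !mul1r addrC subrK //.
Qed.

Theorem theorem3p2 (R : numFieldType) (d q : nat) (hd : (1 <= d)%N) (hq : (2 <= q)%N) :
  dist_mx R (@hadj d q) = mx_eval (hpoly R d q) (adj_mx R (@hadj d q)).
Proof.
have hq0 : (0 < q)%N by apply: leq_trans hq.
have -> : dist_mx R (@hadj d q) = mxT (fun u v => (gdist (@hadj d q) u v)%:R) by [].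
have -> : adj_mx R (@hadj d q) = AH R d q by [].
rewrite -[mx_eval _ _]mulmx1 -mxT_id.
rewrite (eq_mxT (g := fun u v => \sum_S kappa R q S * PMf (GS R S) u v)); last first.
  by move=> u v; rewrite gdist_ham // dist_expand.
rewrite (eq_mxT (g := fun u v => \sum_(S : {ffun 'I_d -> bool}) 1 * PMf (GS R S) u v)
   (f := fun u v : hvertex d q => (u == v)%:R)); last by move=> u v; rewrite id_expand.
rewrite !mxT_lin mulmx_sumr; apply: eq_bigr => S _.
by rewrite scale1r eval_P // coef_eq.
Qed.
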